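(* Let $Q$ be a rational function with distinct poles $z_1,\dotsc,z_d$ ($d\ge1$) of orders $r_1,\dotsc,r_d$. Put $P=\prod_{i=1}^d(z-z_i)^{r_i}$ and $P_0=\prod_{i=1}^d(z-z_i)$, and for each $n\ge1$ write $Q^{(n)}=\frac{\alpha_nR_n}{PP_0^n}$ with $\alpha_n\in\mathbb{C}$ and $R_n\in\mathbb{C}[z]$ monic. Then $\frac{\log|n!/\alpha_n|}{n}\to0$ as $n\to\infty$. *)

(* Defs.v *)
From HB Require Import structures.
From mathcomp Require Import all_boot all_order all_algebra.
From mathcomp Require Import complex.
From mathcomp Require Import all_classical all_reals all_analysis.
Set Implicit Arguments. Unset Strict Implicit. Unset Printing Implicit Defensive.
Import Order.TTheory GRing.Theory Num.Theory.
Local Open Scope ring_scope.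

(* Rational functions over C = R[i] are represented by pairs (numerator, denominator)
   of polynomials; a pair (a, b) with b != 0 stands for a / b. *)

Definition ratderiv (C : comNzRingType) (q : {poly C} * {poly C}) : {poly C} * {poly C} :=
  (q.1^`() * q.2 - q.1 * q.2^`(), q.2 ^+ 2).

Definition ratderivn (C : comNzRingType) (n : nat) (q : {poly C} * {poly C}) :=
  iter n (@ratderiv C) q.

Definition ratfun_eq (C : comNzRingType) (q1 q2 : {poly C} * {poly C}) : Prop :=
  q1.1 * q2.2 = q2.1 * q1.2.

(* Main.v *)
Require Import Defs.
From HB Require Import structures.
From mathcomp Require Import all_boot all_order all_algebra.
From mathcomp Require Import complex.
From mathcomp Require Import all_classical all_reals all_analysis.
From mathcomp Require Import zify ring lra.
Import Order.TTheory GRing.Theory Num.Theory.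
Local Open Scope classical_set_scope.
Local Open Scope ring_scope.

Lemma coefM_top (C : nzSemiRingType) (p q : {poly C}) k l :
  (size p <= k.+1)%N -> (size q <= l.+1)%N -> (p * q)`_(k + l) = p`_k * q`_l.
Proof.
move=> hp hq.
have hk : (k < (k + l).+1)%N by lia.
rewrite coefM (bigD1 (Ordinal hk)) //= big1 ?addr0; first by rewrite addKn.
move=> j /eqP hne.
have hj : nat_of_ord j != k by apply/eqP => e; apply: hne; apply: val_inj.
case: (ltngtP j k) hj => // hjk _.
  rewrite [q`_ _]nth_default ?mulr0 //; apply: leq_trans hq _; lia.
rewrite [p`_ _]nth_default ?mul0r //; apply: leq_trans hp _; lia.
Qed.

Lemma key_deriv (C : numFieldType) (a b : {poly C}) na nb :
  size a = na.+1 -> size b = nb.+1 -> (na < nb)%N ->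
  size (a^`() * b - a * b^`()) = (na + nb)%N /\
  lead_coef (a^`() * b - a * b^`()) = (na%:R - nb%:R) * lead_coef a * lead_coef b.
Proof.
move=> ha hb hab.
set N := _ - _.
have a0 : a != 0 by rewrite -size_poly_eq0 ha.
have b0 : b != 0 by rewrite -size_poly_eq0 hb.
have la0 : lead_coef a != 0 by rewrite lead_coef_eq0.
have lb0 : lead_coef b != 0 by rewrite lead_coef_eq0.
have sa' : (size a^`() <= na)%N by have := lt_size_deriv a0; rewrite ha.
have sb' : (size b^`() <= nb)%N by have := lt_size_deriv b0; rewrite hb.
have hsN : (size N <= na + nb)%N.
  apply: leq_trans (size_polyD _ _) _; rewrite size_polyN geq_max.
  apply/andP; split; apply: leq_trans (size_polyMleq _ _) _. rewrite hb addnS /= leq_add2r //. rewrite ha addSn /= leq_add2l //.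
have hc : N`_(na + nb).-1 = (na%:R - nb%:R) * lead_coef a * lead_coef b.
  have nb0 : (0 < nb)%N by apply: leq_ltn_trans hab.
  have e2 : (na + nb).-1 = (na + nb.-1)%N by rewrite -!subn1 addnBA.
  have t2 : (a * b^`())`_(na + nb).-1 = lead_coef a * (lead_coef b *+ nb).
    rewrite e2 (@coefM_top _ a b^`() na nb.-1); first last.
    - by rewrite prednK.
    - by rewrite ha.
    by rewrite coef_deriv prednK // !lead_coefE ha hb.
  rewrite coefB t2.
  case: na ha hab sa' {hsN e2 t2} => [|na] ha hab sa'.
    have -> : a^`() = 0 by apply/eqP; rewrite -size_poly_eq0 -leqn0.
    rewrite mul0r coef0 sub0r; ring.
  have e1 : (na.+1 + nb).-1 = (na + nb)%N by rewrite addSn.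
  rewrite e1 (@coefM_top _ a^`() b na nb) ?hb //.
  have -> : lead_coef a = a`_na.+1 by rewrite lead_coefE ha.
  have -> : b`_nb = lead_coef b by rewrite lead_coefE hb.
  rewrite coef_deriv; ring.
have hc0 : N`_(na + nb).-1 != 0.
  rewrite hc !mulf_neq0 // subr_eq0 eqr_nat; lia.
have hsz : size N = (na + nb)%N.
  apply/eqP; rewrite eqn_leq hsN /=.
  case: leqP => // h; exfalso; move: hc0; rewrite nth_default //; first by rewrite eqxx.
  by rewrite -ltnS (ltn_predK h).
by split => //; rewrite lead_coefE hsz.
Qed.

Lemma ratderiv_step (C : numFieldType) (q : {poly C} * {poly C}) (v : nat) (c : C) :
  q.1 != 0 -> q.2 != 0 -> (0 < v)%N -> (size q.1 + v)%N = size q.2 ->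
  lead_coef q.1 / lead_coef q.2 = c ->
  let q' := ratderiv q in
  [/\ q'.1 != 0, q'.2 != 0, (size q'.1 + v.+1)%N = size q'.2 &
      lead_coef q'.1 / lead_coef q'.2 = - v%:R * c].
Proof.
case: q => a b /= a0 b0 v0 hs hc.
rewrite /ratderiv /=.
have [na ha] : exists na, size a = na.+1.
  by exists (size a).-1; rewrite prednK // lt0n size_poly_eq0.
have hb : size b = (na + v).+1 by rewrite -hs ha addSn.
have hlt : (na < na + v)%N by rewrite -{1}[na]addn0 ltn_add2l.
have [hsz hl] := @key_deriv C a b na (na + v) ha hb hlt.
have b20 : b ^+ 2 != 0 by rewrite expf_neq0.
have la0 : lead_coef a != 0 by rewrite lead_coef_eq0.
have lb0 : lead_coef b != 0 by rewrite lead_coef_eq0.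
split => //.
- rewrite -size_poly_eq0 hsz -lt0n; apply: leq_trans (leq_addl na _).
  exact: leq_ltn_trans (leq0n na) hlt.
- have := size_exp b 2; rewrite hb /= => e.
  rewrite -[size (b ^+ 2)]prednK; last by rewrite lt0n size_poly_eq0.
  rewrite e hsz; lia.
- rewrite hl lead_coef_exp natrD -hc; field.
  by rewrite lb0.
Qed.

Lemma ratderivn_shift (C : comNzRingType) (q a b : {poly C}) n :
  ratderivn n (q * b + a, b) =
  (q^`(n) * (ratderivn n (a, b)).2 + (ratderivn n (a, b)).1, (ratderivn n (a, b)).2).
Proof.
elim: n => [|n IH]; first by rewrite derivn0.
rewrite /ratderivn !iterS; rewrite /ratderivn in IH; rewrite IH derivnS.
case: (iter n _ (a, b)) => X B /=.
rewrite /ratderiv /=.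
congr (_, _).
rewrite derivD derivM; ring.
Qed.
Lemma binS_id (m n : nat) :
  ((m.+1 + n) * (n`! * 'C(m + n, m)) = (n.+1)`! * 'C(m + n.+1, m))%N.
Proof.
have e1 : 'C(m + n, m) = 'C(m + n, n).
  by rewrite -bin_sub ?leq_addr // addKn.
have e2 : 'C(m + n.+1, m) = 'C(m.+1 + n, n.+1).
  by rewrite -bin_sub ?leq_addr // addKn addnS addSn.
have := mul_bin_diag (m.+1 + n) n.
rewrite addSn /= -e1 e2 factS => h.
rewrite mulnCA addSn h; ring.
Qed.

Lemma bin_bound (m n : nat) : ('C(m + n, m) <= n.+1 ^ m)%N.
Proof.
elim: m => [|m IH]; first by rewrite bin0 expn0.
have := mul_bin_diag (m.+1 + n) m.
rewrite addSn /= => h.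
rewrite expnS.
have h2 : (m.+1 * 'C((m + n).+1, m.+1) <= m.+1 * (n.+1 * n.+1 ^ m))%N.
  rewrite -h; nia.
by rewrite leq_pmul2l in h2.
Qed.

Lemma ratderivn_A0 (C : numFieldType) (a b : {poly C}) (m : nat) :
  a != 0 -> b != 0 -> (size a + m.+1)%N = size b ->
  forall n, let q := ratderivn n (a, b) in
  [/\ q.1 != 0, q.2 != 0, (size q.1 + (m.+1 + n))%N = size q.2 &
   lead_coef q.1 / lead_coef q.2 =
     lead_coef a / lead_coef b * (-1) ^+ n * (n`! * 'C(m + n, m))%:R].
Proof.
move=> a0 b0 hs; elim => [|n [h1 h2 h3 h4]].
  by rewrite /= !addn0 binn expr0 !mulr1.
have := @ratderiv_step C (ratderivn n (a, b)) (m.+1 + n) _ h1 h2 (ltn0Sn _) h3 h4.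
rewrite /= -/(ratderivn n.+1 (a, b)) => -[g1 g2 g3 g4]; split => //.
  by rewrite -g3 addnS.
rewrite g4 -binS_id natrM exprS; ring.
Qed.

Lemma lim_part (R : realType) (K : R) (m N : nat) (f : nat -> R) :
  (forall n, (N <= n)%N -> (0 < n)%N -> f n = (K - ln ('C(m + n, m))%:R) / n%:R) ->
  f n @[n --> \oo] --> 0.
Proof.
move=> hf.
pose u (n : nat) : R := `|K| * (2 * n.+1%:R^-1) + (4 * m%:R) * Num.sqrt (n.+1%:R^-1).
have hu : u n @[n --> \oo] --> 0.
  have hh : (n.+1%:R^-1 : R) @[n --> \oo] --> 0 := cvg_harmonic.
  have hs : (Num.sqrt (n.+1%:R^-1) : R) @[n --> \oo] --> 0.
    rewrite -sqrtr0; apply: (cvg_comp _ _ hh); exact: sqrt_continuous.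
  rewrite -[0]addr0; apply: cvgD.
    rewrite -(mulr0 `|K|); apply: cvgMl_tmp; rewrite -(mulr0 2); exact: cvgMl_tmp.
  rewrite -(mulr0 (4 * m%:R)); exact: cvgMl_tmp.
apply: (@squeeze_cvgr _ _ _ _ (fun n => - u n) u).
- exists N.+1 => // n /= hn.
  have n0 : (0 < n)%N by apply: leq_trans hn.
  have Nn : (N <= n)%N by apply: ltnW.
  rewrite hf // /u.
  set x : R := n%:R.
  have x1 : 1 <= x by rewrite /x (ler_nat R 1 n).
  have x0 : 0 < x by lra.
  set s := Num.sqrt (n.+1%:R : R).
  have s0 : 0 < s by rewrite sqrtr_gt0 ltr0n.
  have ss : s * s = x + 1 by rewrite -expr2 sqr_sqrtr ?ler0n // -natr1.
  have -> : Num.sqrt (n.+1%:R^-1 : R) = s^-1 by rewrite sqrtrV ?ler0n.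
  have -> : (n.+1%:R : R) = x + 1 by rewrite -natr1.
  set L := ln _.
  have L0 : 0 <= L.
    by apply: ln_ge0; rewrite (ler_nat R 1) bin_gt0 leq_addr.
  have Ls : L <= 2 * m%:R * s.
    have e1 : L <= ln ((n.+1 ^ m)%:R : R).
      rewrite /L ler_ln ?posrE ?ltr0n ?expn_gt0 ?bin_gt0 ?leq_addr //.
      by rewrite ler_nat bin_bound.
    have e3 : ln (n.+1%:R : R) = ln s *+ 2 by rewrite -lnXn // sqr_sqrtr ?ler0n.
    rewrite natrX lnXn ?ltr0n // e3 in e1.
    have e4 : ln s < s := ln_sublinear s0.
    have m0 : 0 <= m%:R :> R by [].
    rewrite -mulrnA -mulr_natr natrM in e1.
    nra.
  have ha : `|K| / x <= `|K| * (2 * (x + 1)^-1).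
    rewrite mulrA ler_pdivrMr // -!mulrA ler_peMr // [_^-1 * x]mulrC mulrA ler_pdivlMr; lra.
  have hb : L / x <= 4 * m%:R * s^-1.
    rewrite ler_pdivrMr // mulrAC ler_pdivlMr //.
    have : L * s <= 2 * m%:R * s * s by apply: ler_wpM2r; lra.
    have : 0 <= m%:R :> R by [].
    nra.
  have hK : K / x <= `|K| / x by rewrite ler_pdivrMr // divfK ?ler_norm //; lra.
  have hK' : - (`|K| / x) <= K / x.
    by rewrite -mulNr ler_pdivrMr // divfK; [rewrite lerNl -normrN ler_norm| lra].
  have hL : 0 <= L / x by apply: divr_ge0; lra.
  have hsm : 0 <= 4 * m%:R * s^-1.
    by apply: mulr_ge0; [apply: mulr_ge0 => //; lra | rewrite invr_ge0; lra].
  rewrite mulrBl; apply/andP; split; lra.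
- rewrite -oppr0; exact: cvgN.
- exact: hu.
Qed.

Lemma normc_sign (R : rcfType) (n : nat) :
  ComplexField.Normc.normc ((-1) ^+ n : R[i]) = 1.
Proof.
elim: n => [|n IH]; first by rewrite expr0 ComplexField.Normc.normc1.
by rewrite exprS ComplexField.Normc.normcM IH normcN ComplexField.Normc.normc1 mulr1.
Qed.

Lemma normc_nat (R : rcfType) (k : nat) :
  ComplexField.Normc.normc (k%:R : R[i]) = k%:R.
Proof. by rewrite normcMn ComplexField.Normc.normc1. Qed.

Theorem lemma4p3 (R : realType) (d : nat) (z : 'I_d -> R[i]) (r : 'I_d -> nat)
  (A : {poly R[i]}) (alpha : nat -> R[i]) (Rn : nat -> {poly R[i]}) :
  (0 < d)%N ->
  injective z ->
  (forall i, 0 < r i)%N ->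
  let P := \prod_(i < d) ('X - (z i)%:P) ^+ r i in
  let P0 := \prod_(i < d) ('X - (z i)%:P) in
  coprimep A P ->
  (forall n, (1 <= n)%N ->
     Rn n \is monic /\
     ratfun_eq (ratderivn n (A, P)) (alpha n *: Rn n, P * P0 ^+ n)) ->
  (ln (ComplexField.Normc.normc (n`!%:R / alpha n)) / n%:R : R) @[n --> \oo] --> 0.
Proof.
move=> hd zi hr P P0 hcop H.
have Pm : P \is monic by apply: monic_prod => i _; apply: monic_exp; apply: monicXsubC.
have P0m : P0 \is monic by exact: monic_prod_XsubC.
have P0n : P != 0 by apply: monic_neq0.
have [q [A0 [eA hsA A00]]] : exists q A0, [/\ A = q * P + A0, (size A0 < size P)%N & A0 != 0].
  exists (A %/ P), (A %% P); split; first exact: divp_eq.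
    by rewrite ltn_modp.
  apply/negP => /eqP h0.
  have dv : P %| A by apply/modp_eq0P.
  have cp : coprimep P P := coprimep_dvdr dv hcop.
  rewrite coprimepp in cp.
  have : (1 < size P)%N.
    apply: (@root_size_gt1 _ (z (Ordinal hd))) P0n _.
    rewrite /root /P horner_prod (bigD1 (Ordinal hd)) //= horner_exp hornerXsubC subrr.
    by rewrite expr0n eqn0Ngt hr /= mul0r.
  by rewrite (eqP cp).
have [m hm] : exists m, (size A0 + m.+1)%N = size P.
  move: hsA; move: (size A0) (size P) => a b h; exists (b - a).-1; lia.
have hit := @ratderivn_A0 _ A0 P m A00 P0n hm.
set c0 := lead_coef A0 / lead_coef P.
have c00 : c0 != 0.
  by rewrite /c0 mulf_neq0 ?invr_eq0 ?lead_coef_eq0.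
apply: (@lim_part R (- ln (ComplexField.Normc.normc c0)) m (size q)).
move=> n hn n0.
have [H1 H2] := H n n0.
have e : ratderivn n (A, P) = ratderivn n (A0, P).
  by rewrite eA ratderivn_shift derivn_poly0 // mul0r add0r -surjective_pairing.
rewrite e in H2.
have [h1 h2 h3 h4] := hit n.
move: H2 h1 h2 h3 h4; rewrite /ratfun_eq.
case: (ratderivn n (A0, P)) => X B /= H2 h1 h2 h3 h4.
have hal : alpha n = lead_coef X / lead_coef B.
  have := congr1 lead_coef H2.
  rewrite !lead_coefM lead_coefZ (monicP H1) (monicP Pm) lead_coef_exp (monicP P0m).
  rewrite expr1n !mulr1 => ->.
  by rewrite mulfK // lead_coef_eq0.
rewrite hal h4 -/c0.
clearbody c0.
congr (_ / _).
have nc0 : 0 < ComplexField.Normc.normc c0.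
  rewrite lt_neqAle; apply/andP; split.
    by apply/eqP => h; move/eqP: c00; apply; apply: ComplexField.Normc.eq0_normc.
  by rewrite /ComplexField.Normc.normc; case: (c0) => ? ?; apply: sqrtr_ge0.
have Cpos : (0 < ('C(m + n, m))%:R :> R) by rewrite ltr0n bin_gt0 leq_addr.
have f0 : (n`!%:R : R) != 0 by rewrite pnatr_eq0 -lt0n fact_gt0.
rewrite ComplexField.Normc.normcM ComplexField.Normc.normcV !ComplexField.Normc.normcM.
rewrite normc_sign !normc_nat natrM.
have -> : (n`!%:R : R) / (ComplexField.Normc.normc c0 * 1 * (n`!%:R * ('C(m + n, m))%:R))
   = (ComplexField.Normc.normc c0)^-1 / ('C(m + n, m))%:R.
  field; rewrite f0 /=; apply/andP; split; by rewrite lt0r_neq0.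
rewrite ln_div ?posrE ?invr_gt0 // lnV ?posrE //.
Qed.
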